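(* Let $\mathcal H=\{h_1,\dots,h_k\}$ be an admissible set of $k\ge 2$ distinct integers with $0\in\mathcal H$, let $0\le \ell_1,\ell_2\le k$, and let $p<R$ be prime. Then \[ U_1(p)=-\sum_{\substack{(r,A)=1\\(r,p)=1}}\frac{z^*_{r,p,\ell_1}y^*_{r,\ell_2}}{f_1^*(r)}-\frac{\nu_p^*}{p-1}\sum_{\substack{(r,A)=1\\(r,p)=1}}\frac{z^*_{r,p,\ell_1}z^*_{r,p,\ell_2}}{f_1^*(r)}, \] and \[ U_3(p)=\sum_{\substack{(r,A)=1\\(r,p)=1}}\frac{z^*_{r,p,\ell_1}z^*_{r,p,\ell_2}}{f_1^*(r)}. \]
   Context: $P(n;\mathcal H)=\prod_{h\in\mathcal H}(n+h)$. For squarefree $d$: - $\nu_d$ is the number of residues $a$ mod $d$ with $P(a;\mathcal H)\equiv0\pmod d$; - $\nu^*_d$ is the number of such $a$ that additionally satisfy $(a,d)=1$ (so $\nu^*_d=\prod_{p\mid d}(\nu_p-1)$). The set $\mathcal H$ is admissible if $\nu_p<p$ for all $p$. Let $\mathfrak S(\mathcal H)=\prod_p(1-\nu_p/p)(1-1/p)^{-k}$. For squarefree $d$, let $f(d)=d/\nu_d$ and $f_1(d)=\prod_{p\mid d}(p-\nu_p)/\nu_p$. For $R>1$, \[ \lambda_{d,\ell}=\mu(d)\frac{f(d)}{f_1(d)}\frac{\mathfrak S(\mathcal H)}{\ell!}\sum_{r<R/d,(r,d)=1}\frac{\mu^2(r)}{f_1(r)}(\log\tfrac R{rd})^\ell\quad\text{for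 } d<R, \] and $\lambda_{d,\ell}=0$ for $d\ge R$. Let $A$ be the product of the primes $p$ with $\nu^*_p=0$. For squarefree $r$ with $(r,A)=1$, let $f^*(r)=\phi(r)/\nu^*_r$ and $f_1^*(r)=\prod_{p\mid r}\frac{p-\nu_p}{\nu_p-1}$. Define \[ y^*_{r,\ell}=\mu(r)f_1^*(r)\sum_{(d,A)=1}\frac{\lambda_{dr,\ell}}{f^*(dr)}\quad\text{if } (r,A)=1,\ r<R, \] and $0$ otherwise. Define \[ z^*_{r,p,\ell}=\mu(pr)f_1^*(r)\sum_{(d,A)=1}\frac{\lambda_{drp,\ell}}{f^*(dr)}\quad\text{if } r<R/p,\ (r,A)=1, \] and $0$ otherwise. Finally, \[ U_1(p)=\sum_{d,e:\ p\mid d,\ p\nmid e}\frac{\lambda_{d,\ell_1}\lambda_{e,\ell_2}\nu^*_{[d,e]/p}}{\phi([d,e]/p)},\qquad U_3(p)=\sum_{d,e:\ p\mid d,\ p\mid e}\frac{\lambda_{d,\ell_1}\lambda_{e,\ell_2}\nu^*_{[d,e]/p}}{\phi([d,e]/p)}. \] *)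

(* Defs.v *)
From HB Require Import structures.
From mathcomp Require Import all_boot all_order all_algebra.
From mathcomp Require Import all_classical all_reals all_analysis.
Set Implicit Arguments. Unset Strict Implicit. Unset Printing Implicit Defensive.
Import Order.TTheory GRing.Theory Num.Theory.
Import numFieldNormedType.Exports.
Local Open Scope ring_scope.

Definition Ppoly (H : seq int) (n : int) : int := \prod_(h <- H) (n + h).

Definition nu (H : seq int) (d : nat) : nat :=
  count (fun a : nat => (d%:Z %| Ppoly H a%:Z)%Z) (iota 0 d).

Definition nu_star (H : seq int) (d : nat) : nat :=
  count (fun a : nat => (d%:Z %| Ppoly H a%:Z)%Z && coprime a d) (iota 0 d).

Definition admissible (H : seq int) : Prop :=
  forall p : nat, prime p -> (nu H p < p)%N.

Definition squarefree (n : nat) : bool :=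
  (0 < n)%N && all (fun p => logn p n == 1%N) (primes n).

Definition mu {R : pzRingType} (n : nat) : R :=
  if squarefree n then (-1) ^+ size (primes n) else 0.

(* (r, A) = 1, where A is the product of the primes q with nu*_q = 0 :
   no prime divisor q of r has nu*_q = 0 *)
Definition coprimeA (H : seq int) (r : nat) : bool :=
  all (fun q => nu_star H q != 0%N) (primes r).

Section Weights.
Variables (R : realType) (H : seq int) (RR : R).

Let k : nat := size H.

Definition sing_series : R :=
  limn (fun N : nat => (\prod_(p < N | prime p)
          ((1 - (nu H p)%:R / p%:R) * (1 - 1 / p%:R) ^- k) : R)).

Definition f (d : nat) : R := d%:R / (nu H d)%:R.
Definition f1 (d : nat) : R :=
  \prod_(q <- primes d) ((q%:R - (nu H q)%:R) / (nu H q)%:R).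
Definition fstar (r : nat) : R := (totient r)%:R / (nu_star H r)%:R.
Definition f1star (r : nat) : R :=
  \prod_(q <- primes r) ((q%:R - (nu H q)%:R) / ((nu H q)%:R - 1)).

(* all sums below run over positive integers n < bnd; every summand
   vanishes for n >= RR, so these are the (finitely supported) full sums *)
Definition bnd : nat := (Num.truncn RR).+1.

Definition lambda (l d : nat) : R :=
  if (0 < d)%N && (d%:R < RR) then
    mu d * (f d / f1 d) * (sing_series / (l`!)%:R) *
    \sum_(1 <= r < bnd | (r%:R < RR / d%:R) && coprime r d)
       (mu r ^+ 2 / f1 r * (ln (RR / (r%:R * d%:R))) ^+ l)
  else 0.

Definition ystar (l r : nat) : R :=
  if (0 < r)%N && coprimeA H r && (r%:R < RR) then
    mu r * f1star r *
    \sum_(1 <= d < bnd | coprimeA H d) (lambda l (d * r) / fstar (d * r))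
  else 0.

Definition zstar (l r p : nat) : R :=
  if (0 < r)%N && coprimeA H r && (r%:R < RR / p%:R) then
    mu (p * r) * f1star r *
    \sum_(1 <= d < bnd | coprimeA H d) (lambda l (d * r * p) / fstar (d * r))
  else 0.

Definition U1 (l1 l2 p : nat) : R :=
  \sum_(1 <= d < bnd | (p %| d)%N) \sum_(1 <= e < bnd | ~~ (p %| e)%N)
    (lambda l1 d * lambda l2 e * (nu_star H (lcmn d e %/ p))%:R
      / (totient (lcmn d e %/ p))%:R).

Definition U3 (l1 l2 p : nat) : R :=
  \sum_(1 <= d < bnd | (p %| d)%N) \sum_(1 <= e < bnd | (p %| e)%N)
    (lambda l1 d * lambda l2 e * (nu_star H (lcmn d e %/ p))%:R
      / (totient (lcmn d e %/ p))%:R).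

End Weights.

(* Main.v *)
Require Import Defs.
From HB Require Import structures.
From mathcomp Require Import all_boot all_order all_algebra.
From mathcomp Require Import all_classical all_reals all_analysis.
From mathcomp Require Import ring lra zify.

Import Order.TTheory GRing.Theory Num.Theory.
Set Implicit Arguments. Unset Strict Implicit. Unset Printing Implicit Defensive.

Lemma logn_sqf n q : squarefree n -> (logn q n <= 1)%N.
Proof.
case/andP=> n0 /allP Hall; case: (boolP (q \in primes n)) => Hq.
  by rewrite (eqP (Hall q Hq)).
by rewrite -logn_gt0 -leqNgt in Hq; rewrite (leq_trans Hq).
Qed.

Lemma sqf_intro n : (0 < n)%N -> (forall q, logn q n <= 1)%N -> squarefree n.
Proof.
move=> n0 H; apply/andP; split => //; apply/allP => q Hq.
by rewrite eqn_leq H /= logn_gt0.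
Qed.

Lemma sqf_mul m n : squarefree (m * n) ->
  [/\ squarefree m, squarefree n & coprime m n].
Proof.
move=> Hs; have := Hs; case/andP; rewrite muln_gt0 => /andP[m0 n0] _.
have Hl q : (logn q m + logn q n <= 1)%N by rewrite -lognM // logn_sqf.
split.
- apply: sqf_intro => // q; exact: leq_trans (leq_addr _ _) (Hl q).
- apply: sqf_intro => // q; exact: leq_trans (leq_addl _ _) (Hl q).
- rewrite coprime_has_primes //; apply/hasPn => q Hqn; apply/negP => Hqm.
  move: (Hl q) Hqn Hqm; rewrite /= -!logn_gt0; lia.
Qed.

Lemma sqf_mulI m n : squarefree m -> squarefree n -> coprime m n ->
  squarefree (m * n).
Proof.
move=> Hm Hn Hc; have m0 : (0 < m)%N by case/andP: Hm.
have n0 : (0 < n)%N by case/andP: Hn.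
apply: sqf_intro => [|q]; first by rewrite muln_gt0 m0.
rewrite lognM //.
move: Hc; rewrite coprime_has_primes // => /hasPn Hc.
case: (boolP (q \in primes n)) => Hq.
  have := Hc q Hq; rewrite -logn_gt0 -leqNgt leqn0 => /eqP ->.
  exact: logn_sqf.
by move: Hq; rewrite -logn_gt0 -leqNgt leqn0 => /eqP ->; rewrite addn0 logn_sqf.
Qed.

Lemma sqf_dvd d n : squarefree n -> d %| n -> squarefree d.
Proof.
move=> Hn Hd; move: Hn; rewrite -(divnK Hd) => /sqf_mul[]; done.
Qed.

Lemma sqf_gt0 n : squarefree n -> (0 < n)%N.
Proof. by case/andP. Qed.

Lemma perm_primesM m n : (0 < m)%N -> (0 < n)%N -> coprime m n ->
  perm_eq (primes (m * n)) (primes m ++ primes n).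
Proof.
move=> m0 n0 c; apply: uniq_perm.
- exact: primes_uniq.
- by rewrite cat_uniq !primes_uniq /= -coprime_has_primes // andbT.
- by move=> q; rewrite mem_cat primesM.
Qed.

Lemma big_primesM (R : comPzRingType) (G : nat -> R) m n :
  (0 < m)%N -> (0 < n)%N -> coprime m n ->
  (\prod_(q <- primes (m * n)%N) G q = (\prod_(q <- primes m) G q) * \prod_(q <- primes n) G q)%R.
Proof. by move=> m0 n0 c; rewrite (perm_big _ (perm_primesM m0 n0 c)) big_cat. Qed.

Lemma mult_sqf (R : comPzRingType) (G : nat -> R) : G 1%N = 1%R ->
  (forall m n, (0 < m)%N -> (0 < n)%N -> coprime m n -> G (m * n)%N = (G m * G n)%R) ->
  forall n, squarefree n -> G n = (\prod_(q <- primes n) G q)%R.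
Proof.
move=> G1 GM; elim/ltn_ind => n IH sqn.
have n0 := sqf_gt0 sqn.
case: (ltngtP n 1) => [|n1|->]; first by rewrite ltnNge n0.
  have [q [m [Hn pq ltn]]] : exists q m, [/\ n = (q * m)%N, prime q & (m < n)%N].
    exists (pdiv n), (n %/ pdiv n); split.
    - by rewrite mulnC divnK // pdiv_dvd.
    - exact: pdiv_prime.
    - by rewrite ltn_Pdiv // prime_gt1 // pdiv_prime.
  move: sqn; rewrite Hn => sqn.
  have [_ sqm cqm] := sqf_mul sqn.
  have q0 := prime_gt0 pq; have m0 := sqf_gt0 sqm.
  by rewrite GM // big_primesM // primes_prime // big_seq1 (IH _ ltn sqm).
by rewrite G1 big_nil.
Qed.

Section NuStar.
Variable H : seq int.
Local Open Scope ring_scope.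

Lemma Ppoly_dvd_sub (m x y : int) : (m %| x - y)%Z -> (m %| Ppoly H x - Ppoly H y)%Z.
Proof.
move=> hm; rewrite /Ppoly; elim: H => [|h s IH]; first by rewrite !big_nil subrr dvdz0.
rewrite !big_cons.
have -> : (x + h) * (\prod_(j <- s) (x + j)) - (y + h) * (\prod_(j <- s) (y + j)) =
  (x + h) * ((\prod_(j <- s) (x + j)) - (\prod_(j <- s) (y + j))) + (x - y) * (\prod_(j <- s) (y + j)) by ring.
by apply: rpredD; [apply: dvdz_mull | apply: dvdz_mulr].
Qed.

Lemma Ppoly_dvd_mod (m a : nat) :
  (m%:Z %| Ppoly H a%:Z)%Z = (m%:Z %| Ppoly H (a %% m)%N%:Z)%Z.
Proof.
have hd : (m%:Z %| a%:Z - (a %% m)%N%:Z)%Z.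
  by rewrite {1}(divn_eq a m) PoszD PoszM addrK; apply: dvdz_mull; apply: dvdzz.
have := Ppoly_dvd_sub hd.
set X := Ppoly H _; set Y := Ppoly H _ => hXY.
apply/idP/idP => h.
  have -> : Y = X - (X - Y) by ring.
  exact: rpredB.
have -> : X = (X - Y) + Y by ring.
exact: rpredD.
Qed.

Definition Qd (d a : nat) : bool := (d%:Z %| Ppoly H a%:Z)%Z && coprime a d.

Lemma nu_star_sum d : nu_star H d = (\sum_(a < d | Qd d a) 1)%N.
Proof.
rewrite /nu_star -sum1_count.
have -> : iota 0 d = index_iota 0 d by rewrite /index_iota subn0.
by rewrite big_mkord.
Qed.

Lemma nu_starM m n : (0 < m)%N -> (0 < n)%N -> coprime m n ->
  nu_star H (m * n) = (nu_star H m * nu_star H n)%N.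
Proof.
move=> m0 n0 cmn; rewrite !nu_star_sum.
have QE a : Qd (m * n) a = Qd m (a %% m) && Qd n (a %% n).
  rewrite /Qd PoszM Gauss_dvdz ?coprimezE //.
  rewrite -Ppoly_dvd_mod -(Ppoly_dvd_mod n) coprimeMr !coprime_modl.
  by rewrite -!andbA; congr (_ && _); rewrite andbCA.
pose h (a : 'I_(m * n)) : 'I_m * 'I_n := (Ordinal (ltn_pmod a m0), Ordinal (ltn_pmod a n0)).
have hinj : injective h.
  move=> a b /(congr1 (fun x => (val x.1, val x.2))) /= [Ha Hb].
  apply: val_inj => /=.
  have := chinese_remainder cmn a b; rewrite Ha Hb !eqxx !modn_small //= => /eqP //.
have hbij : bijective h by apply: inj_card_bij => //; rewrite card_prod !card_ord.
rewrite big_distrlr /= pair_big /=.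
rewrite (reindex h); last by apply: onW_bij.
by apply: eq_bigl => a /=; rewrite QE.
Qed.

Lemma Ppoly0 : 0%Z \in H -> Ppoly H 0 = 0.
Proof. by move=> H0; rewrite /Ppoly (big_rem 0%Z H0) /= addr0 mul0r. Qed.

Lemma nuE q : prime q -> 0%Z \in H -> nu H q = (nu_star H q).+1.
Proof.
move=> pq H0; have q1 := prime_gt1 pq; have q0 := prime_gt0 pq.
have Hi : iota 0 q = 0%N :: iota 1 q.-1 by rewrite -{1}(prednK q0).
have c0 : coprime 0 q = false.
  by rewrite /coprime gcd0n; apply/negbTE; rewrite neq_ltn q1 orbT.
rewrite /nu /nu_star Hi /= Ppoly0 // dvdz0 c0.
rewrite add1n add0n; congr S; apply: eq_in_count => a; rewrite mem_iota => /andP[a1 aq].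
rewrite add1n prednK // in aq.
by rewrite /= coprime_sym prime_coprime // gtnNdvd // andbT.
Qed.

Lemma nu_star1 : nu_star H 1 = 1%N.
Proof. by rewrite /nu_star /= dvd1z. Qed.

End NuStar.

Local Open Scope ring_scope.

Lemma RM (V : nmodType) (F : nat -> V) B r : (0 < r)%N ->
  (forall m, (B <= m)%N -> (r %| m)%N -> F m = 0) ->
  \sum_(m < B | (r %| m)%N) F m = \sum_(d < B) F (d * r)%N.
Proof.
move=> r0 hF.
have E (d : 'I_B) : F (d * r)%N = \sum_(m < B | val m == (d * r)%N) F m.
  case: (ltnP (d * r) B) => h.
    by symmetry; apply: (big_pred1 (Ordinal h)) => m /=; rewrite -val_eqE.
  rewrite big_pred0 ?hF ?dvdn_mull // => m; apply/negbTE.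
  by rewrite neq_ltn (leq_trans (ltn_ord m) h).
rewrite (eq_bigr _ (fun d _ => E d)).
under eq_bigr => d _ do rewrite big_mkcond.
rewrite exchange_big /= [LHS]big_mkcond.
apply: eq_bigr => m _; rewrite -big_mkcond; case: ifP => rm.
  have mB : (m %/ r < B)%N by apply: leq_ltn_trans (leq_div m r) (ltn_ord m).
  symmetry; apply: (big_pred1 (Ordinal mB)) => d /=.
  by rewrite -val_eqE /= -{1}(divnK rm) eqn_pmul2r // eq_sym.
rewrite big_pred0 // => d; apply/negbTE/eqP => hm.
by move: rm; rewrite hm dvdn_mull.
Qed.

Lemma sum_from1 (V : nmodType) (F : nat -> V) (P : pred nat) n : (0 < n)%N -> F 0%N = 0 ->
  \sum_(1 <= i < n | P i) F i = \sum_(i < n | P i) F i.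
Proof.
move=> n0 F0; rewrite -big_mkord big_ltn_cond //.
by case: (P 0%N); rewrite ?F0 ?add0r.
Qed.

Section Arith.
Variables (R : realType) (H : seq int).
Hypothesis H0 : 0%Z \in H.
Hypothesis adm : admissible H.

Definition gs (n : nat) : R := (nu_star H n)%:R / (totient n)%:R.
Definition hq (q : nat) : R := (q%:R - (nu H q)%:R) / ((nu H q)%:R - 1).

Lemma gs1 : gs 1 = 1.
Proof. by rewrite /gs nu_star1 /= divr1. Qed.

Lemma gsM m n : (0 < m)%N -> (0 < n)%N -> coprime m n -> gs (m * n) = gs m * gs n.
Proof. by move=> m0 n0 c; rewrite /gs nu_starM // totient_coprime // !natrM mulf_div. Qed.

Lemma gs_prod n : squarefree n -> gs n = \prod_(q <- primes n) gs q.
Proof. by apply: mult_sqf; [exact: gs1 | exact: gsM]. Qed.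

Lemma gs0 n : squarefree n -> ~~ coprimeA H n -> gs n = 0.
Proof.
move=> sqn; rewrite /coprimeA -has_predC => /hasP [q Hq /negPn/eqP nq0].
by rewrite gs_prod // (big_rem q Hq) /= /gs nq0 !mul0r.
Qed.

Lemma gs_neq0 n : squarefree n -> coprimeA H n -> gs n != 0.
Proof.
move=> sqn /allP an; rewrite gs_prod // prodf_seq_neq0; apply/allP => q Hq /=.
have pq : prime q by move: Hq; rewrite mem_primes => /and3P[].
rewrite /gs totient_prime // mulf_neq0 // ?invr_neq0 // pnatr_eq0 ?an //.
by rewrite -lt0n -ltnS prednK ?prime_gt1 // prime_gt0.
Qed.

Lemma coprimeA_dvd d n : (0 < n)%N -> (d %| n)%N -> coprimeA H n -> coprimeA H d.
Proof.
move=> n0 dn /allP h; apply/allP => q Hq; apply: h; move: Hq.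
rewrite !mem_primes => /and3P[pq d0 qd]; by rewrite pq n0 (dvdn_trans qd).
Qed.

Lemma gs_inv_prime q : prime q -> nu_star H q != 0%N -> (gs q)^-1 = 1 + hq q.
Proof.
move=> pq ns; rewrite /gs /hq nuE // totient_prime //.
have q0 := prime_gt0 pq.
have Eq : (q%:R : R) = (q.-1)%:R + 1 by rewrite -{1}(prednK q0) -addn1 natrD.
have Es : ((nu_star H q).+1%:R : R) = (nu_star H q)%:R + 1 by rewrite -addn1 natrD.
rewrite invf_div Eq Es.
rewrite addrK; field; by rewrite pnatr_eq0.
Qed.

Lemma f1starE r : f1star R H r = \prod_(q <- primes r) hq q.
Proof. by []. Qed.

Lemma f1star_neq0 r : coprimeA H r -> f1star R H r != 0.
Proof.
move=> /allP ar; rewrite f1starE prodf_seq_neq0; apply/allP => q Hq /=.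
have pq : prime q by move: Hq; rewrite mem_primes => /and3P[].
rewrite /hq nuE // mulf_neq0 // ?invr_neq0 //.
  rewrite subr_eq0 eqr_nat; apply/negP => /eqP e.
  by have := adm pq; rewrite nuE // -e ltnn.
by rewrite -addn1 natrD addrK pnatr_eq0 ar.
Qed.

Lemma f1starM d q : prime q -> (0 < d)%N -> coprime d q ->
  f1star R H (d * q) = f1star R H d * hq q.
Proof.
move=> pq d0 c; have q0 := prime_gt0 pq.
by rewrite !f1starE big_primesM // (primes_prime pq) big_seq1.
Qed.

Lemma f1star1 : f1star R H 1 = 1.
Proof. by rewrite f1starE big_nil. Qed.

Lemma DS B c : squarefree c -> coprimeA H c -> (c < B)%N ->
  \sum_(r < B | (r %| c)%N) f1star R H r = (gs c)^-1.
Proof.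
elim/ltn_ind: c => c IH sqc ac cB.
have c0 := sqf_gt0 sqc.
case: (ltngtP c 1) => [|c1|c1]; first by rewrite ltnNge c0.
  have [q [m [Hc pq ltm]]] : exists q m, [/\ c = (q * m)%N, prime q & (m < c)%N].
    exists (pdiv c), (c %/ pdiv c)%N; split.
    - by rewrite mulnC divnK // pdiv_dvd.
    - exact: pdiv_prime.
    - by rewrite ltn_Pdiv // prime_gt1 // pdiv_prime.
  have q0 := prime_gt0 pq.
  move: sqc ac cB; rewrite Hc => sqc ac cB.
  have [_ sqm cqm] := sqf_mul sqc.
  have m0 := sqf_gt0 sqm.
  have am : coprimeA H m by apply: coprimeA_dvd ac; rewrite ?muln_gt0 ?q0 // dvdn_mull.
  have aq : nu_star H q != 0%N.
    move/allP: ac; apply; rewrite mem_primes pq muln_gt0 q0 m0 /=; exact: dvdn_mulr.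
  have nqm : ~~ (q %| m)%N by rewrite -prime_coprime.
  have mB : (m < B)%N by apply: leq_ltn_trans cB; rewrite leq_pmull.
  have split : \sum_(r < B | (r %| q * m)%N) f1star R H r =
     \sum_(r < B | (r %| m)%N) f1star R H r +
     \sum_(r < B | (q %| r)%N) (if (r %/ q %| m)%N then f1star R H r else 0).
    rewrite big_mkcond [X in X + _]big_mkcond [X in _ + X]big_mkcond -big_split.
    apply: eq_bigr => r _ /=.
    case: (boolP (q %| r)%N) => qr.
      have rm : (r %| m)%N = false.
        by apply/negbTE/negP => /(dvdn_trans qr) qm; rewrite qm in nqm.
      by rewrite rm add0r -{1}(divnK qr) mulnC dvdn_pmul2l.
    have crq : coprime r q by rewrite coprime_sym prime_coprime.
    by rewrite Gauss_dvdr // addr0.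
  rewrite split (IH m) //.
  rewrite (@RM _ (fun r => if (r %/ q %| m)%N then f1star R H r else 0) B q q0); last first.
    move=> r rB qr; case: ifP => // rqm; exfalso.
    have := dvdn_leq m0 rqm; rewrite leqNgt => /negP; apply.
    rewrite -(ltn_pmul2l q0) [X in (_ < X)%N]mulnC (divnK qr); exact: leq_trans cB rB.
  under eq_bigr => d _ do rewrite mulnK //.
  rewrite -big_mkcond /=.
  have -> : \sum_(i < B | (i %| m)%N) f1star R H (i * q) =
            \sum_(i < B | (i %| m)%N) f1star R H i * hq q.
    apply: eq_bigr => d dm; rewrite f1starM //.
      exact: dvdn_gt0 m0 dm.
    rewrite coprime_sym prime_coprime //; apply: contra nqm => qd.
    exact: dvdn_trans qd dm.
  rewrite -mulr_suml (IH m) //.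
  rewrite gsM // [RHS]invfM (gs_inv_prime pq aq).
  ring.
move: cB; rewrite c1 => cB; rewrite gs1 invr1 -f1star1.
by apply: (big_pred1 (Ordinal cB)) => r /=; rewrite dvdn1 -val_eqE.
Qed.



Lemma Kp B d e : squarefree d -> squarefree e -> (gcdn d e < B)%N ->
  gs (lcmn d e) = gs d * gs e * \sum_(r < B | (r %| gcdn d e)%N) f1star R H r.
Proof.
move=> sqd sqe cB.
have d0 := sqf_gt0 sqd; have e0 := sqf_gt0 sqe.
set c := gcdn d e in cB *.
have c0 : (0 < c)%N by rewrite gcdn_gt0 d0.
have ce : (c %| e)%N by apply: dvdn_gcdr.
have cd : (c %| d)%N by apply: dvdn_gcdl.
set e' := (e %/ c)%N.
have He : e = (c * e')%N by rewrite mulnC divnK.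
have [sqc sqe' cce'] : [/\ squarefree c, squarefree e' & coprime c e'].
  by apply: sqf_mul; rewrite -He.
have e'0 := sqf_gt0 sqe'.
have cde' : coprime d e'.
  rewrite /coprime -dvdn1 -(eqP cce') dvdn_gcd dvdn_gcdr andbT dvdn_gcd dvdn_gcdl /=.
  by apply: (dvdn_trans (dvdn_gcdr d e')); rewrite He dvdn_mull.
have Hl : lcmn d e = (d * e')%N.
  apply/eqP; rewrite -(eqn_pmul2r c0) muln_lcm_gcd {1}He.
  by rewrite mulnA mulnAC.
rewrite Hl gsM // He gsM //.
case: (boolP (coprimeA H c)) => ac.
  rewrite DS //.
  have := gs_neq0 sqc ac => hc.
  by field.
have -> : gs d = 0.
  apply: gs0 => //; apply: contra ac; exact: coprimeA_dvd.
by rewrite !mul0r.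
Qed.


Lemma core B (F1 F2 : nat -> R) (P : pred nat) :
  (forall n, F1 n != 0 -> squarefree n /\ (n < B)%N) ->
  (forall n, F2 n != 0 -> squarefree n /\ (n < B)%N) ->
  \sum_(d < B) \sum_(e < B | P e) F1 d * F2 e * gs (lcmn d e) =
  \sum_(r < B) f1star R H r * (\sum_(d < B | (r %| d)%N) F1 d * gs d)
                           * (\sum_(e < B | P e && (r %| e)%N) F2 e * gs e).
Proof.
move=> S1 S2.
pose T (d e r : nat) := f1star R H r * (F1 d * gs d) * (F2 e * gs e).
have E1 (d e : 'I_B) : F1 d * F2 e * gs (lcmn d e) =
   \sum_(r < B) (if (r %| d)%N && (r %| e)%N then T d e r else 0).
  case: (eqVneq (F1 d) 0) => [h1|h1].
    by rewrite h1 !mul0r big1 // => r _; case: ifP => // _; rewrite /T h1 mul0r mulr0 mul0r.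
  case: (eqVneq (F2 e) 0) => [h2|h2].
    by rewrite h2 mulr0 mul0r big1 // => r _; case: ifP => // _; rewrite /T h2 mul0r mulr0.
  have [sqd dB] := S1 _ h1; have [sqe eB] := S2 _ h2.
  have d0 := sqf_gt0 sqd.
  rewrite (@Kp B) //; last first.
    exact: leq_ltn_trans (dvdn_leq d0 (dvdn_gcdl _ _)) dB.
  rewrite !mulr_sumr big_mkcond; apply: eq_bigr => r _; rewrite dvdn_gcd.
  by case: ifP => _; rewrite /T ?mulr0 //; ring.
have E2 (r : 'I_B) : f1star R H r * (\sum_(d < B | (r %| d)%N) F1 d * gs d)
                           * (\sum_(e < B | P e && (r %| e)%N) F2 e * gs e) =
   \sum_(d < B) \sum_(e < B) (if (r %| d)%N && (P e && (r %| e)%N) then T d e r else 0).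
  rewrite [f1star _ _ _ * _]mulr_sumr mulr_suml big_mkcond; apply: eq_bigr => d _.
  case: ifP => rd /=.
    rewrite mulr_sumr big_mkcond; apply: eq_bigr => e _.
    by case: ifP => _; rewrite /T ?mulr0 //; ring.
  by rewrite big1.
rewrite (eq_bigr _ (fun r _ => E2 r)).
have E3 (d e : 'I_B) : (if P e then \sum_(r < B) (if (r %| d)%N && (r %| e)%N then T d e r else 0) else 0)
   = \sum_(r < B) (if (r %| d)%N && (P e && (r %| e)%N) then T d e r else 0).
  case: (P e) => /=; first by [].
  by rewrite big1 // => r _; rewrite andbF.
transitivity (\sum_(d < B) \sum_(e < B) \sum_(r < B)
   (if (r %| d)%N && (P e && (r %| e)%N) then T d e r else 0)).
  apply: eq_bigr => d _; rewrite big_mkcond; apply: eq_bigr => e _ /=.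
  by rewrite -E3; case: (P e) => //=; exact: E1.
rewrite [RHS]exchange_big; apply: eq_bigr => d _ /=.
exact: exchange_big.
Qed.

End Arith.

Section Main.
Variables (R : realType) (H : seq int) (RR : R) (p : nat).
Hypotheses (H0 : 0%Z \in H) (adm : admissible H) (RR1 : 1 < RR) (pp : prime p).

Notation B := (bnd RR).
Notation L l := (lambda H RR l).
Notation g := (gs R H).

Lemma B0 : (0 < B)%N.
Proof. by []. Qed.

Lemma p0 : (0 < p)%N.
Proof. exact: prime_gt0. Qed.

Lemma lam_supp l n : L l n != 0 -> [/\ (0 < n)%N, n%:R < RR & squarefree n].
Proof.
rewrite /lambda; case: ifP => [/andP[n0 nR]|]; last by rewrite eqxx.
rewrite /mu; case: ifP => // _; by rewrite !mul0r eqxx.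
Qed.

Lemma lam_ltB l n : L l n != 0 -> (n < B)%N.
Proof.
case/lam_supp => _ nR _.
have R0 : 0 <= RR by apply: le_trans (ltW RR1).
by rewrite /bnd ltnS truncn_ge_nat // ltW.
Qed.

Lemma lam0 l : L l 0 = 0.
Proof. by rewrite /lambda. Qed.

Definition Z l r := \sum_(d < B) L l (d * r * p)%N * g (d * r)%N.
Definition Yf l r := \sum_(d < B) L l (d * r)%N * g (d * r)%N.

Lemma Z0 l r : ~~ [&& (0 < r)%N, coprimeA H r, coprime r p & squarefree r] -> Z l r = 0.
Proof.
move=> nP; apply: big1 => d _.
case: (eqVneq (L l (d * r * p)%N) 0) => [->|h]; first by rewrite mul0r.
have [n0 _ sq] := lam_supp h.
have [sqdr _ cdrp] := sqf_mul sq; have [_ sqr cdr] := sqf_mul sqdr.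
have dr0 : (0 < d * r)%N by move: n0; rewrite !muln_gt0 => /andP[/andP[-> ->]].
have r0 : (0 < r)%N by move: dr0; rewrite muln_gt0 => /andP[].
have crp : coprime r p by move: cdrp; rewrite coprimeMl => /andP[].
case: (boolP (coprimeA H r)) => ar.
  by move: nP; rewrite r0 ar crp sqr.
rewrite (gs0 _ sqdr) ?mulr0 //; apply: contra ar; apply: coprimeA_dvd => //.
exact: dvdn_mull.
Qed.

Lemma Z_supp l r : Z l r != 0 -> [&& (0 < r)%N, coprimeA H r, coprime r p & squarefree r].
Proof. by apply: contraNT => h; rewrite Z0. Qed.

Lemma fstar_inv n : (fstar R H n)^-1 = g n.
Proof. by rewrite /fstar /gs invf_div. Qed.

Lemma zstarE l r : (0 < r)%N -> coprimeA H r ->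
  zstar H RR l r p = mu (p * r)%N * f1star R H r * Z l r.
Proof.
move=> r0 ar; rewrite /zstar r0 ar /=.
have Hsum : \sum_(1 <= d < bnd RR | coprimeA H d) (L l (d * r * p)%N / fstar R H (d * r)%N) = Z l r.
  rewrite sum_from1 //; last by rewrite !mul0n lam0 mul0r.
  rewrite big_mkcond; apply: eq_bigr => d _; rewrite fstar_inv.
  case: ifP => ad //.
  case: (eqVneq (L l (d * r * p)%N) 0) => [->|h]; first by rewrite mul0r.
  have [n0 _ sq] := lam_supp h.
  have [sqdr _ _] := sqf_mul sq.
  have dr0 : (0 < d * r)%N by move: n0; rewrite !muln_gt0 => /andP[/andP[-> ->]].
  rewrite (gs0 _ sqdr) ?mulr0 //; apply/negP => adr.
  by move: ad; rewrite (coprimeA_dvd dr0 (dvdn_mulr _ (dvdnn d)) adr).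
case: ifP => rRp; first by rewrite Hsum.
suff -> : Z l r = 0 by rewrite mulr0.
apply: big1 => d _.
case: (eqVneq (L l (d * r * p)%N) 0) => [->|h]; first by rewrite mul0r.
have [n0 nR _] := lam_supp h; exfalso.
move: rRp; rewrite ltr_pdivlMr ?ltr0n ?p0 // -natrM => /negbT; rewrite -leNgt => hle.
have d0 : (0 < d)%N by move: n0; rewrite !muln_gt0 => /andP[/andP[]].
have : ((r * p)%N%:R <= (d * r * p)%N%:R :> R) by rewrite ler_nat -mulnA leq_pmull.
move=> h2; have := lt_le_trans nR (le_trans hle h2); by rewrite ltxx.
Qed.

Lemma ystarE l r : (0 < r)%N -> coprimeA H r ->
  ystar H RR l r = mu r * f1star R H r * Yf l r.
Proof.
move=> r0 ar; rewrite /ystar r0 ar /=.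
have Hsum : \sum_(1 <= d < bnd RR | coprimeA H d) (L l (d * r)%N / fstar R H (d * r)%N) = Yf l r.
  rewrite sum_from1 //; last by rewrite !mul0n lam0 mul0r.
  rewrite big_mkcond; apply: eq_bigr => d _; rewrite fstar_inv.
  case: ifP => ad //.
  case: (eqVneq (L l (d * r)%N) 0) => [->|h]; first by rewrite mul0r.
  have [n0 _ sqdr] := lam_supp h.
  rewrite (gs0 _ sqdr) ?mulr0 //; apply/negP => adr.
  by move: ad; rewrite (coprimeA_dvd n0 (dvdn_mulr _ (dvdnn d)) adr).
case: ifP => rRp; first by rewrite Hsum.
suff -> : Yf l r = 0 by rewrite mulr0.
apply: big1 => d _.
case: (eqVneq (L l (d * r)%N) 0) => [->|h]; first by rewrite mul0r.
have [n0 nR _] := lam_supp h; exfalso.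
move: rRp => /negbT; rewrite -leNgt => hle.
have d0 : (0 < d)%N by move: n0; rewrite !muln_gt0 => /andP[].
have : (r%:R <= (d * r)%N%:R :> R) by rewrite ler_nat leq_pmull.
move=> h2; have := lt_le_trans nR (le_trans hle h2); by rewrite ltxx.
Qed.


Lemma AZ l r : \sum_(d < B | (r %| d)%N) L l (d * p)%N * g d = Z l r.
Proof.
case: (posnP r) => [->|r0].
  rewrite (@Z0 l 0) ?ltnn //; apply: big1 => d; rewrite dvd0n => /eqP ->.
  by rewrite mul0n lam0 mul0r.
rewrite (@RM _ (fun d => L l (d * p)%N * g d) B r r0) // => m mB _.
case: (eqVneq (L l (m * p)%N) 0) => [->|h]; first by rewrite mul0r.
have := lam_ltB h; rewrite ltnNge (leq_trans mB) // leq_pmulr // p0 //.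
Qed.

Lemma Bsplit l r : (0 < r)%N -> coprime r p ->
  \sum_(e < B | ~~ (p %| e)%N && (r %| e)%N) L l e * g e = Yf l r - g p * Z l r.
Proof.
move=> r0 crp.
have E1 : \sum_(e < B | (r %| e)%N) L l e * g e = Yf l r.
  rewrite (@RM _ (fun e => L l e * g e) B r r0) // => m mB _.
  case: (eqVneq (L l m) 0) => [->|h]; first by rewrite mul0r.
  by have := lam_ltB h; rewrite ltnNge mB.
have E2 : \sum_(e < B | (p %| e)%N && (r %| e)%N) L l e * g e = g p * Z l r.
  rewrite big_mkcondr (@RM _ (fun e => if (r %| e)%N then L l e * g e else 0) B p p0); last first.
    move=> m mB _; case: ifP => // _.
    case: (eqVneq (L l m) 0) => [->|h]; first by rewrite mul0r.
    by have := lam_ltB h; rewrite ltnNge mB.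
  rewrite -AZ mulr_sumr [RHS]big_mkcond; apply: eq_bigr => d _ /=.
  rewrite Gauss_dvdl //; case: ifP => // _.
  case: (eqVneq (L l (d * p)%N) 0) => [->|h]; first by rewrite !(mul0r, mulr0).
  have [n0 _ sq] := lam_supp h; have [_ _ cdp] := sqf_mul sq.
  have d0 : (0 < d)%N by move: n0; rewrite muln_gt0 => /andP[].
  rewrite gsM // ?p0 //; ring.
rewrite -E1 -E2 [X in _ = X - _]big_mkcond [X in _ = _ - X]big_mkcond [LHS]big_mkcond -sumrB.
apply: eq_bigr => e _; case: (p %| e)%N; case: (r %| e)%N => /=; by rewrite ?subrr ?subr0.
Qed.

Lemma sqf_prime q : prime q -> squarefree q.
Proof.
move=> pq; apply: sqf_intro; first exact: prime_gt0.
by move=> x; rewrite logn_prime //; case: (x == q).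
Qed.

Lemma mu_pr r : (0 < r)%N -> coprime r p -> mu (p * r)%N = - mu r :> R.
Proof.
move=> r0 crp; have cpr : coprime p r by rewrite coprime_sym.
rewrite /mu.
have -> : squarefree (p * r) = squarefree r.
  apply/idP/idP => [/sqf_mul[] //|sr]; apply: sqf_mulI => //; exact: sqf_prime.
case: ifP => sr; last by rewrite oppr0.
rewrite (perm_size (perm_primesM p0 r0 cpr)) primes_prime //=.
by rewrite exprS mulN1r.
Qed.

Lemma mu_sq r : squarefree r -> mu r * mu r = 1 :> R.
Proof. by move=> sr; rewrite /mu sr -exprMn mulrNN mulr1 expr1n. Qed.


Lemma T1 l1 l2 r : (0 < r)%N -> coprimeA H r ->
  zstar H RR l1 r p * ystar H RR l2 r / f1star R H r = - (f1star R H r * Z l1 r * Yf l2 r).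
Proof.
move=> r0 ar; rewrite zstarE // ystarE //.
case: (eqVneq (Z l1 r) 0) => [->|hZ]; first by rewrite !(mulr0, mul0r, oppr0).
have /and4P [_ _ crp sqr] := Z_supp hZ.
have f0 := @f1star_neq0 R H H0 adm r ar.
rewrite mu_pr //.
transitivity (-(mu r * mu r) * (f1star R H r * Z l1 r * Yf l2 r) * (f1star R H r / f1star R H r)).
  by ring.
by rewrite mu_sq // divff // mulr1 mulN1r.
Qed.

Lemma T2 l1 l2 r : (0 < r)%N -> coprimeA H r ->
  zstar H RR l1 r p * zstar H RR l2 r p / f1star R H r = f1star R H r * Z l1 r * Z l2 r.
Proof.
move=> r0 ar; rewrite !zstarE //.
case: (eqVneq (Z l1 r) 0) => [->|hZ]; first by rewrite !(mulr0, mul0r, oppr0).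
have /and4P [_ _ crp sqr] := Z_supp hZ.
have f0 := @f1star_neq0 R H H0 adm r ar.
rewrite mu_pr //.
transitivity ((mu r * mu r) * (f1star R H r * Z l1 r * Z l2 r) * (f1star R H r / f1star R H r)).
  by ring.
by rewrite mu_sq // divff // mulr1 mul1r.
Qed.

Lemma Z0' l r : ~~ (coprimeA H r && coprime r p) -> Z l r = 0.
Proof. by move=> h; apply: Z0; apply: contra h => /and4P[_ -> -> _]. Qed.

Lemma RHS1 l1 l2 :
  \sum_(1 <= r < bnd RR | coprimeA H r && coprime r p)
     (zstar H RR l1 r p * ystar H RR l2 r / f1star R H r)
  = - \sum_(r < B) f1star R H r * Z l1 r * Yf l2 r.
Proof.
rewrite sum_from1 //; last by rewrite /zstar /= !mul0r.
rewrite -sumrN big_mkcond; apply: eq_bigr => r _; case: ifP => c.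
  case: (posnP r) => [r0|r0].
    rewrite r0 (@Z0 l1 0) ?ltnn //; by rewrite /zstar /= !(mul0r, mulr0, oppr0).
  by rewrite T1 //; case/andP: c.
by rewrite Z0' ?c // !(mulr0, mul0r, oppr0).
Qed.

Lemma RHS2 l1 l2 :
  \sum_(1 <= r < bnd RR | coprimeA H r && coprime r p)
     (zstar H RR l1 r p * zstar H RR l2 r p / f1star R H r)
  = \sum_(r < B) f1star R H r * Z l1 r * Z l2 r.
Proof.
rewrite sum_from1 //; last by rewrite /zstar /= !mul0r.
rewrite big_mkcond; apply: eq_bigr => r _; case: ifP => c.
  case: (posnP r) => [r0|r0].
    rewrite r0 (@Z0 l1 0) ?ltnn //; by rewrite /zstar /= !(mul0r, mulr0, oppr0).
  by rewrite T2 //; case/andP: c.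
by rewrite Z0' ?c // !(mulr0, mul0r, oppr0).
Qed.

Lemma S2 l n : L l n != 0 -> squarefree n /\ (n < B)%N.
Proof. by move=> h; have [_ _ sq] := lam_supp h; split => //; exact: lam_ltB h. Qed.

Lemma S1 l n : L l (n * p)%N != 0 -> squarefree n /\ (n < B)%N.
Proof.
move=> h; have [_ _ sq] := lam_supp h; have [sqn _ _] := sqf_mul sq; split => //.
by apply: leq_ltn_trans (lam_ltB h); rewrite leq_pmulr // p0.
Qed.

Lemma U1E l1 l2 : U1 H RR l1 l2 p =
  \sum_(r < B) f1star R H r * Z l1 r * (Yf l2 r - g p * Z l2 r).
Proof.
have step0 : U1 H RR l1 l2 p = \sum_(d < B | (p %| d)%N) \sum_(e < B | ~~ (p %| e)%N)
     L l1 d * L l2 e * g (lcmn d e %/ p)%N.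
  rewrite /U1 sum_from1 //; last by rewrite big1 // => e _; rewrite lam0 !mul0r.
  apply: eq_bigr => d _; rewrite sum_from1 //; last by rewrite lam0 mulr0 !mul0r.
  by apply: eq_bigr => e _; rewrite /gs mulrA.
rewrite step0 (@RM _ (fun d => \sum_(e < B | ~~ (p %| e)%N) L l1 d * L l2 e * g (lcmn d e %/ p)%N) B p p0); last first.
  move=> m mB _; apply: big1 => e _; case: (eqVneq (L l1 m) 0) => [->|h]; first by rewrite !mul0r.
  by have := lam_ltB h; rewrite ltnNge mB.
have step1 (d : 'I_B) : \sum_(e < B | ~~ (p %| e)%N) L l1 (d * p)%N * L l2 e * g (lcmn (d * p) e %/ p)%N
   = \sum_(e < B | ~~ (p %| e)%N) L l1 (d * p)%N * L l2 e * g (lcmn d e).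
  apply: eq_bigr => e pe.
  case: (eqVneq (L l1 (d * p)%N) 0) => [->|h]; first by rewrite !mul0r.
  have [n0 _ sq] := lam_supp h; have [_ _ cdp] := sqf_mul sq.
  have d0 : (0 < d)%N by move: n0; rewrite muln_gt0 => /andP[].
  have cep : coprime e p by rewrite coprime_sym prime_coprime.
  have g1 : gcdn (d * p)%N e = gcdn d e by rewrite gcdnC Gauss_gcdl // gcdnC.
  have gd0 : (0 < gcdn d e)%N by rewrite gcdn_gt0 d0.
  have -> : lcmn (d * p)%N e = (lcmn d e * p)%N.
    apply/eqP; rewrite -(eqn_pmul2r gd0) -{1}g1 muln_lcm_gcd [X in _ == X]mulnAC muln_lcm_gcd.
    by rewrite mulnAC.
  by rewrite mulnK ?p0.
rewrite (eq_bigr _ (fun d _ => step1 d)).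
rewrite (core H0 (fun e => ~~ (p %| e)%N) (@S1 l1) (@S2 l2)).
apply: eq_bigr => r _; rewrite AZ.
case: (eqVneq (Z l1 r) 0) => [->|hZ]; first by rewrite !(mulr0, mul0r).
have /and4P [r0 ar crp _] := Z_supp hZ.
by rewrite Bsplit.
Qed.

Lemma U3E l1 l2 : U3 H RR l1 l2 p =
  \sum_(r < B) f1star R H r * Z l1 r * Z l2 r.
Proof.
have step0 : U3 H RR l1 l2 p = \sum_(d < B | (p %| d)%N) \sum_(e < B | (p %| e)%N)
     L l1 d * L l2 e * g (lcmn d e %/ p)%N.
  rewrite /U3 sum_from1 //; last by rewrite big1 // => e _; rewrite lam0 !mul0r.
  apply: eq_bigr => d _; rewrite sum_from1 //; last by rewrite lam0 mulr0 !mul0r.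
  by apply: eq_bigr => e _; rewrite /gs mulrA.
rewrite step0 (@RM _ (fun d => \sum_(e < B | (p %| e)%N) L l1 d * L l2 e * g (lcmn d e %/ p)%N) B p p0); last first.
  move=> m mB _; apply: big1 => e _; case: (eqVneq (L l1 m) 0) => [->|h]; first by rewrite !mul0r.
  by have := lam_ltB h; rewrite ltnNge mB.
have step1 (d : 'I_B) : \sum_(e < B | (p %| e)%N) L l1 (d * p)%N * L l2 e * g (lcmn (d * p) e %/ p)%N
   = \sum_(e < B | xpredT e) L l1 (d * p)%N * L l2 (e * p)%N * g (lcmn d e).
  rewrite (@RM _ (fun e => L l1 (d * p)%N * L l2 e * g (lcmn (d * p) e %/ p)%N) B p p0); last first.
    move=> m mB _; case: (eqVneq (L l2 m) 0) => [->|h]; first by rewrite !(mulr0, mul0r).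
    by have := lam_ltB h; rewrite ltnNge mB.
  by apply: eq_bigr => e _; rewrite -muln_lcml mulnK ?p0.
rewrite (eq_bigr _ (fun d _ => step1 d)).
rewrite (core H0 xpredT (@S1 l1) (@S1 l2)).
apply: eq_bigr => r _; rewrite AZ.
by congr (_ * _); rewrite -AZ; apply: eq_bigl.
Qed.

End Main.

Unset Implicit Arguments.
Theorem lemma13 (R : realType) (H : seq int) (RR : R) (l1 l2 p : nat) :
  uniq H -> (2 <= size H)%N -> 0%Z \in H -> admissible H ->
  (l1 <= size H)%N -> (l2 <= size H)%N ->
  1 < RR -> prime p -> p%:R < RR ->
  U1 H RR l1 l2 p =
    - (\sum_(1 <= r < bnd RR | coprimeA H r && coprime r p)
          (zstar H RR l1 r p * ystar H RR l2 r / f1star R H r))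
    - (nu_star H p)%:R / (p%:R - 1) *
      (\sum_(1 <= r < bnd RR | coprimeA H r && coprime r p)
          (zstar H RR l1 r p * zstar H RR l2 r p / f1star R H r))
  /\
  U3 H RR l1 l2 p =
    \sum_(1 <= r < bnd RR | coprimeA H r && coprime r p)
       (zstar H RR l1 r p * zstar H RR l2 r p / f1star R H r).
Proof.
move=> _ _ H0 adm _ _ RR1 pp _.
split.
  rewrite U1E // RHS1 // RHS2 // opprK.
  have gp : gs R H p = (nu_star H p)%:R / (p%:R - 1).
    have p0 := prime_gt0 pp.
    have Eq : (p%:R : R) = (p.-1)%:R + 1 by rewrite -{1}(prednK p0) -addn1 natrD.
    by rewrite /gs totient_prime // Eq addrK.
  rewrite -gp mulr_sumr -sumrB; apply: eq_bigr => r _; ring.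
by rewrite U3E // RHS2.
Qed.
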